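(* Let $f:[0,\infty)\to[0,\infty)$ be a strictly increasing bijection with $f(0)=0$, let $0<m<M$, and let $\sigma$ be a matrix mean. If the inverse function $f^{-1}$ is differentiable and convex, then $$\frac{f(M)}{M}(A\sigma B)\le f(A)\sigma f(B)\le \frac{f(m)}{m}(A\sigma B)$$ for all $A,B\in\mathbb{P}_n^+$ with spectra contained in $[m,M]$. If $f^{-1}$ is differentiable and concave, then $$\frac{f(m)}{m}(A\sigma B)\le f(A)\sigma f(B)\le \frac{f(M)}{M}(A\sigma B)$$ for all such $A,B$.
   Context: $\mathbb{P}_n$ (resp. $\mathbb{P}_n^+$) denotes the set of $n\times n$ complex positive semidefinite (resp. positive definite) matrices, $I$ is the identity matrix and $\le$ is the Löwner order. For a Hermitian matrix $A$ and a real function $f$ defined on its spectrum, $f(A)$ is defined by functional calculus. ''Spectrum contained in $[m,M]$'' means $mI\le A\le MI$. A matrix mean is a binary operation $\sigma:\mathbb{P}_n\times\mathbb{P}_n\to\mathbb{P}_n$ such that (i) $A\le C$ and $B\le D$ imply $A\sigma B\le C\sigma D$; (ii) $C^*(A\sigma B)C\le (C^*AC)\sigma(C^*BC)$ for all $C$; (iii) if $A_k\downarrow A$ and $B_k\downarrow B$ (decreasing sequences converging) then $A_k\sigma B_k\downarrow A\sigma B$; (iv) $I\sigma I=I$. *)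

(* Defs.v *)
From HB Require Import structures.
From mathcomp Require Import all_boot all_order all_algebra.
From mathcomp Require Import complex.
From mathcomp Require Import all_classical all_reals topology normedtype sequences derive.
Set Implicit Arguments. Unset Strict Implicit. Unset Printing Implicit Defensive.
Import Order.TTheory GRing.Theory Num.Theory.
Import numFieldTopology.Exports numFieldNormedType.Exports.
Local Open Scope classical_set_scope.
Local Open Scope ring_scope.

Section MatrixDefs.
Variables (R : realType) (n : nat).
Local Notation C := (R[i]).

Definition adjmx (A : 'M[C]_n) : 'M[C]_n := (map_mx Num.conj A)^T.

Definition qform (A : 'M[C]_n) (v : 'cV[C]_n) : C :=
  ((map_mx Num.conj v)^T *m A *m v) 0 0.

Definition psd (A : 'M[C]_n) : Prop :=
  adjmx A = A /\ forall v : 'cV[C]_n, 0 <= qform A v.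

Definition pd (A : 'M[C]_n) : Prop :=
  adjmx A = A /\ forall v : 'cV[C]_n, v != 0 -> 0 < qform A v.

Definition lowner (A B : 'M[C]_n) : Prop := psd (B - A).

Definition mx_cvg (u : nat -> 'M[C]_n) (A : 'M[C]_n) : Prop :=
  forall i j : 'I_n,
    (fun k => complex.Re (u k i j)) @ \oo --> complex.Re (A i j) /\
    (fun k => complex.Im (u k i j)) @ \oo --> complex.Im (A i j).

Definition mx_decr_to (u : nat -> 'M[C]_n) (A : 'M[C]_n) : Prop :=
  (forall k, lowner (u k.+1) (u k)) /\ mx_cvg u A.

Definition unitary (U : 'M[C]_n) : Prop := U *m adjmx U = 1%:M.

(** For Hermitian A this determines FA = f(A)
    uniquely (and such a decomposition exists by the spectral theorem). *)
Definition funcalc (f : R -> R) (A FA : 'M[C]_n) : Prop :=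
  exists (U : 'M[C]_n) (d : 'rV[R]_n),
    [/\ unitary U,
        A = U *m diag_mx (map_mx (fun x => x%:C%C) d) *m adjmx U
      & FA = U *m diag_mx (map_mx (fun x => (f x)%:C%C) d) *m adjmx U].

Definition matrix_mean (sigma : 'M[C]_n -> 'M[C]_n -> 'M[C]_n) : Prop :=
  [/\ (forall A B, psd A -> psd B -> psd (sigma A B)),
      (forall A B C' D, psd A -> psd B -> psd C' -> psd D ->
         lowner A C' -> lowner B D -> lowner (sigma A B) (sigma C' D)),
      (forall (T : 'M[C]_n) A B, psd A -> psd B ->
         lowner (adjmx T *m sigma A B *m T)
                (sigma (adjmx T *m A *m T) (adjmx T *m B *m T))),
      (forall (Ak Bk : nat -> 'M[C]_n) A B,
         (forall k, psd (Ak k)) -> (forall k, psd (Bk k)) -> psd A -> psd B ->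
         mx_decr_to Ak A -> mx_decr_to Bk B ->
         mx_decr_to (fun k => sigma (Ak k) (Bk k)) (sigma A B))
    &
      sigma 1%:M 1%:M = 1%:M].

End MatrixDefs.

Definition convex_on_nonneg (R : realType) (g : R -> R) : Prop :=
  forall x y t : R, 0 <= x -> 0 <= y -> 0 <= t -> t <= 1 ->
    g (t * x + (1 - t) * y) <= t * g x + (1 - t) * g y.

Definition concave_on_nonneg (R : realType) (g : R -> R) : Prop :=
  forall x y t : R, 0 <= x -> 0 <= y -> 0 <= t -> t <= 1 ->
    t * g x + (1 - t) * g y <= g (t * x + (1 - t) * y).

Definition differentiable_on_nonneg (R : realType) (g : R -> R) : Prop :=
  (forall x : R, 0 < x -> derivable g x 1) /\
  cvg ((fun h : R => h^-1 * (g h - g 0)) @ 0^'+).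

(* Main.v *)
Require Import Defs.
From HB Require Import structures.
From mathcomp Require Import all_boot all_order all_algebra.
From mathcomp Require Import complex.
From mathcomp Require Import all_classical all_reals topology normedtype sequences derive.
Import Order.TTheory GRing.Theory Num.Theory.
Local Open Scope ring_scope.
Set Implicit Arguments. Unset Strict Implicit.

Section Helpers.
Variables (R : realType) (n : nat).
Local Notation C := (R[i]).
Local Notation M_ := ('M[C]_n).

Lemma adjmxM (A B : M_) : adjmx (A *m B) = adjmx B *m adjmx A.
Proof. by rewrite /adjmx map_mxM trmx_mul. Qed.

Lemma adjmxK (A : M_) : adjmx (adjmx A) = A.
Proof. by apply/matrixP => i j; rewrite !mxE conjCK. Qed.

Lemma adjmxD (A B : M_) : adjmx (A + B) = adjmx A + adjmx B.
Proof. by apply/matrixP => i j; rewrite !mxE rmorphD. Qed.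

Lemma adjmxN (A : M_) : adjmx (- A) = - adjmx A.
Proof. by apply/matrixP => i j; rewrite !mxE rmorphN. Qed.

Lemma adjmxB (A B : M_) : adjmx (A - B) = adjmx A - adjmx B.
Proof. by rewrite adjmxD adjmxN. Qed.

Lemma conjR (c : R) : Num.conj ((c%:C)%C : C) = (c%:C)%C.
Proof. exact: conjc_real. Qed.

Lemma conjRM (c : R) (z : C) : Num.conj ((c%:C)%C * z) = (c%:C)%C * Num.conj z.
Proof. rewrite rmorphM; congr (_ * _); exact: conjc_real. Qed.

Lemma adjmxZr (c : R) (A : M_) : adjmx ((c%:C)%C *: A) = (c%:C)%C *: adjmx A.
Proof. by apply/matrixP => i j; rewrite !mxE conjRM. Qed.

Lemma adjmx1 : adjmx (1%:M : M_) = 1%:M.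
Proof. by apply/matrixP => i j; rewrite !mxE rmorphMn rmorph1 eq_sym. Qed.

Lemma qformE (T X : M_) v : qform (adjmx T *m X *m T) v = qform X (T *m v).
Proof. by rewrite /qform /adjmx map_mxM trmx_mul !mulmxA. Qed.

Lemma qformD (X Y : M_) v : qform (X + Y) v = qform X v + qform Y v.
Proof. by rewrite /qform mulmxDr mulmxDl mxE. Qed.

Lemma qformZ (a : C) (X : M_) v : qform (a *: X) v = a * qform X v.
Proof. by rewrite /qform -scalemxAr -scalemxAl mxE. Qed.

Lemma psdD (X Y : M_) : psd X -> psd Y -> psd (X + Y).
Proof.
move=> [hX qX] [hY qY]; split; first by rewrite adjmxD hX hY.
by move=> v; rewrite qformD addr_ge0.
Qed.

Lemma psdZ (c : R) (X : M_) : 0 <= c -> psd X -> psd ((c%:C)%C *: X).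
Proof.
move=> c0 [hX qX]; split; first by rewrite adjmxZr hX.
by move=> v; rewrite qformZ mulr_ge0 // ler0c.
Qed.

Lemma lowner_trans (X Y Z : M_) : lowner X Y -> lowner Y Z -> lowner X Z.
Proof.
rewrite /lowner => h1 h2.
have -> : Z - X = (Z - Y) + (Y - X) by rewrite addrA subrK.
exact: psdD.
Qed.

Lemma lownerZ (c : R) (X Y : M_) : 0 <= c -> lowner X Y ->
  lowner ((c%:C)%C *: X) ((c%:C)%C *: Y).
Proof. by rewrite /lowner -scalerBr; apply: psdZ. Qed.

Lemma pd_psd (A : M_) : pd A -> psd A.
Proof.
move=> [hA qA]; split=> // v; case: (eqVneq v 0) => [->|nz].
  by rewrite /qform mulmx0 mxE.
exact: ltW (qA v nz).
Qed.

Lemma scal_conj (c : R) (X : M_) :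
  0 <= c ->
  adjmx (((Num.sqrt c)%:C)%C *: 1%:M) *m X *m (((Num.sqrt c)%:C)%C *: 1%:M)
  = (c%:C)%C *: X.
Proof.
move=> c0; rewrite adjmxZr adjmx1 -scalemxAl mul1mx -scalemxAr mulmx1 scalerA.
by rewrite -rmorphM -expr2 sqr_sqrtr.
Qed.

Lemma sig_hom1 sigma (c : R) (A B : M_) : matrix_mean sigma -> 0 < c ->
  psd A -> psd B ->
  lowner ((c%:C)%C *: sigma A B) (sigma ((c%:C)%C *: A) ((c%:C)%C *: B)).
Proof.
move=> [_ _ htr _ _] c0 pA pB.
have := htr (((Num.sqrt c)%:C)%C *: 1%:M) A B pA pB.
by rewrite !scal_conj // ltW.
Qed.

Lemma VCR (c : R) : c != 0 -> ((c^-1)%:C)%C * ((c%:C)%C : C) = 1.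
Proof. by move=> h; rewrite -rmorphM mulVf // rmorph1. Qed.

Lemma CRV (c : R) : c != 0 -> ((c%:C)%C : C) * ((c^-1)%:C)%C = 1.
Proof. by move=> h; rewrite mulrC VCR. Qed.

Lemma ZK (c : R) (X : M_) : c != 0 -> ((c^-1)%:C)%C *: (((c%:C)%C : C) *: X) = X.
Proof. by move=> h; rewrite scalerA VCR // scale1r. Qed.

Lemma ZKV (c : R) (X : M_) : c != 0 -> ((c%:C)%C : C) *: (((c^-1)%:C)%C *: X) = X.
Proof. by move=> h; rewrite scalerA CRV // scale1r. Qed.

Lemma sig_hom2 sigma (c : R) (A B : M_) : matrix_mean sigma -> 0 < c ->
  psd A -> psd B ->
  lowner (sigma ((c%:C)%C *: A) ((c%:C)%C *: B)) ((c%:C)%C *: sigma A B).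
Proof.
move=> hs c0 pA pB.
have cn : c != 0 by rewrite gt_eqF.
have ci0 : 0 < c^-1 by rewrite invr_gt0.
have := sig_hom1 hs ci0 (psdZ (ltW c0) pA) (psdZ (ltW c0) pB).
rewrite (ZK _ cn) (ZK B cn) => h.
have := lownerZ (ltW c0) h.
by rewrite ZKV.
Qed.

Definition Dg (g : R -> R) (d : 'rV[R]_n) : M_ :=
  diag_mx (map_mx (fun x => ((g x)%:C)%C) d).

Lemma adjmx_Dg g d : adjmx (Dg g d) = Dg g d.
Proof.
apply/matrixP => i j; rewrite /Dg !mxE eq_sym.
case: (eqVneq i j) => [->|_] /=; rewrite ?mulr1n ?mulr0n ?rmorph0 //.
exact: conjR.
Qed.

Lemma qform_diag (D : 'rV[C]_n) (w : 'cV[C]_n) :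
  qform (diag_mx D) w = \sum_i Num.conj (w i 0) * D 0 i * w i 0.
Proof.
rewrite /qform mul_mx_diag mxE; apply: eq_bigr => i _.
by rewrite !mxE.
Qed.

Lemma psd_UDU (U : M_) (g : R -> R) (d : 'rV[R]_n) : (forall i, 0 <= g (d 0 i)) ->
  psd (U *m Dg g d *m adjmx U).
Proof.
move=> hg; split.
  by rewrite !adjmxM adjmxK adjmx_Dg mulmxA.
move=> v; rewrite -{1}(adjmxK U) qformE /Dg qform_diag.
apply: sumr_ge0 => i _; rewrite mxE mulrC mulrA.
apply: mulr_ge0; last first.
  by rewrite mxE ler0c.
exact: mulcJ_ge0.
Qed.

Lemma qform_delta (X : M_) (j : 'I_n) : qform X (delta_mx j 0) = X j j.
Proof.
rewrite /qform.
have -> : (map_mx Num.conj (delta_mx j 0 : 'cV[C]_n))^T = delta_mx 0 j.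
  apply/matrixP => a b; rewrite !mxE.
  by rewrite andbC rmorph_nat.
by rewrite -rowE -colE !mxE.
Qed.

Lemma unitaryV (U : M_) : unitary U -> adjmx U *m U = 1%:M.
Proof. by move=> hU; apply: mulmx1C. Qed.

Lemma qform_U (U X : M_) (j : 'I_n) : unitary U ->
  qform (U *m X *m adjmx U) (U *m delta_mx j 0) = X j j.
Proof.
move=> hU; rewrite -{1}(adjmxK U) qformE mulmxA unitaryV // mul1mx.
exact: qform_delta.
Qed.

Lemma UDU_sub (U : M_) (g h : R -> R) (c : R) (d : 'rV[R]_n) :
  U *m Dg g d *m adjmx U - (c%:C)%C *: (U *m Dg h d *m adjmx U)
  = U *m Dg (fun x => g x - c * h x) d *m adjmx U.
Proof.
rewrite scalemxAl scalemxAr -mulmxBl -mulmxBr; congr (_ *m _ *m _).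
apply/matrixP => i j; rewrite /Dg !mxE.
case: (eqVneq i j) => _ /=; rewrite ?mulr1n ?mulr0n ?mulr0 ?subr0 //.
by rewrite rmorphB rmorphM.
Qed.

Lemma Dg_scal1 (c : R) (d : 'rV[R]_n) : (c%:C)%C *: (1%:M : M_) = Dg (fun _ => c) d.
Proof.
apply/matrixP => i j; rewrite /Dg !mxE.
by case: (eqVneq i j) => _ /=; rewrite ?mulr1n ?mulr0n ?mulr1 ?mulr0.
Qed.

Lemma one_R : ((1 : R)%:C)%C = 1 :> C.
Proof. exact: rmorph1. Qed.

Lemma eig_lb (U : M_) (d : 'rV[R]_n) (c : R) : unitary U ->
  lowner ((c%:C)%C *: 1%:M) (U *m Dg id d *m adjmx U) -> forall j, c <= d 0 j.
Proof.
move=> hU; have e1 : (1%:M : M_) = U *m Dg (fun _ => 1) d *m adjmx U.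
  by rewrite -(Dg_scal1 1) one_R scale1r mulmx1 hU.
rewrite /lowner e1 UDU_sub => -[_ q] j; have := q (U *m delta_mx j 0).
rewrite qform_U // /Dg !mxE eqxx mulr1n.
by rewrite ler0c mulr1 subr_ge0.
Qed.

Lemma eig_ub (U : M_) (d : 'rV[R]_n) (c : R) : unitary U ->
  lowner (U *m Dg id d *m adjmx U) ((c%:C)%C *: 1%:M) -> forall j, d 0 j <= c.
Proof.
move=> hU; have e2 : (c%:C)%C *: 1%:M = U *m Dg (fun _ => c) d *m adjmx U.
  by rewrite -(Dg_scal1 c) -scalemxAr mulmx1 -scalemxAl hU.
rewrite /lowner e2 -[X in _ - X]scale1r -one_R UDU_sub => -[_ q] j.
have := q (U *m delta_mx j 0).
rewrite qform_U // /Dg !mxE eqxx mulr1n.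
by rewrite ler0c mul1r subr_ge0.
Qed.

Lemma UDU_sub2 (U : M_) (g h : R -> R) (c : R) (d : 'rV[R]_n) :
  (c%:C)%C *: (U *m Dg h d *m adjmx U) - U *m Dg g d *m adjmx U
  = U *m Dg (fun x => c * h x - g x) d *m adjmx U.
Proof.
rewrite scalemxAl scalemxAr -mulmxBl -mulmxBr; congr (_ *m _ *m _).
apply/matrixP => i j; rewrite /Dg !mxE.
case: (eqVneq i j) => _ /=; rewrite ?mulr1n ?mulr0n ?mulr0 ?subr0 //.
by rewrite rmorphB rmorphM.
Qed.

Lemma key (f : R -> R) (m M c1 c2 : R) (A FA : M_) :
  0 < m ->
  (forall x, m <= x -> 0 <= f x) ->
  (forall x, m <= x -> x <= M -> c1 * x <= f x /\ f x <= c2 * x) ->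
  pd A -> lowner ((m%:C)%C *: 1%:M) A -> lowner A ((M%:C)%C *: 1%:M) ->
  funcalc f A FA ->
  [/\ psd A, psd FA, lowner ((c1%:C)%C *: A) FA & lowner FA ((c2%:C)%C *: A)].
Proof.
move=> m0 fnn hb pA lA uA [U [d [hU eA eFA]]].
have eA' : A = U *m Dg id d *m adjmx U by rewrite eA.
have eF' : FA = U *m Dg f d *m adjmx U by rewrite eFA.
have hl := eig_lb hU (eq_ind _ (fun X => lowner ((m%:C)%C *: 1%:M) X) lA _ eA').
have hu := eig_ub hU (eq_ind _ (fun X => lowner X ((M%:C)%C *: 1%:M)) uA _ eA').
split; first exact: pd_psd.
- by rewrite eF'; apply: psd_UDU => i; apply: fnn.
- rewrite /lowner eF' eA' UDU_sub; apply: psd_UDU => i.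
  by rewrite subr_ge0; case: (hb _ (hl i) (hu i)).
- rewrite /lowner eF' eA' UDU_sub2; apply: psd_UDU => i.
  by rewrite subr_ge0; case: (hb _ (hl i) (hu i)).
Qed.

Lemma main_gen sigma (f : R -> R) (m M c1 c2 : R) (A B FA FB : M_) :
  matrix_mean sigma -> 0 < m -> 0 < c1 -> 0 < c2 ->
  (forall x, m <= x -> 0 <= f x) ->
  (forall x, m <= x -> x <= M -> c1 * x <= f x /\ f x <= c2 * x) ->
  pd A -> pd B ->
  lowner ((m%:C)%C *: 1%:M) A -> lowner A ((M%:C)%C *: 1%:M) ->
  lowner ((m%:C)%C *: 1%:M) B -> lowner B ((M%:C)%C *: 1%:M) ->
  funcalc f A FA -> funcalc f B FB ->
  lowner ((c1%:C)%C *: sigma A B) (sigma FA FB) /\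
  lowner (sigma FA FB) ((c2%:C)%C *: sigma A B).
Proof.
move=> hs m0 c10 c20 fnn hb pA pB lA uA lB uB fA fB.
have [psA psFA lA1 uA1] := key m0 fnn hb pA lA uA fA.
have [psB psFB lB1 uB1] := key m0 fnn hb pB lB uB fB.
have hs' := hs; case: hs' => _ hmono _ _ _.
split.
- apply: lowner_trans (sig_hom1 hs c10 psA psB) _.
  exact: (hmono _ _ _ _ (psdZ (ltW c10) psA) (psdZ (ltW c10) psB) psFA psFB lA1 lB1).
- apply: lowner_trans _ (sig_hom2 hs c20 psA psB).
  exact: (hmono _ _ _ _ psFA psFB (psdZ (ltW c20) psA) (psdZ (ltW c20) psB) uA1 uB1).
Qed.

End Helpers.

Section Sc.
Variable R : realType.

Lemma ratio_conv (g : R -> R) : g 0 = 0 -> convex_on_nonneg g ->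
  forall y Y, 0 < y -> y <= Y -> g y * Y <= y * g Y.
Proof.
move=> g0 hc y Y y0 yY.
have Y0 : 0 < Y by apply: lt_le_trans yY.
have t0 : 0 <= y / Y by rewrite divr_ge0 // ltW.
have t1 : y / Y <= 1 by rewrite ler_pdivrMr // mul1r.
have := hc Y 0 (y / Y) (ltW Y0) (lexx 0) t0 t1.
rewrite g0 !mulr0 !addr0 divfK ?gt_eqF // => h.
rewrite -ler_pdivlMr // mulrAC; exact: h.
Qed.

Lemma ratio_conc (g : R -> R) : g 0 = 0 -> concave_on_nonneg g ->
  forall y Y, 0 < y -> y <= Y -> y * g Y <= g y * Y.
Proof.
move=> g0 hc y Y y0 yY.
have Y0 : 0 < Y by apply: lt_le_trans yY.
have t0 : 0 <= y / Y by rewrite divr_ge0 // ltW.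
have t1 : y / Y <= 1 by rewrite ler_pdivrMr // mul1r.
have := hc Y 0 (y / Y) (ltW Y0) (lexx 0) t0 t1.
rewrite g0 !mulr0 !addr0 divfK ?gt_eqF // => h.
rewrite -ler_pdivrMr // mulrAC; exact: h.
Qed.


Lemma bounds_gen (f finv : R -> R) (m M : R) (conv : bool) :
  f 0 = 0 ->
  (forall x y, 0 <= x -> x < y -> f x < f y) ->
  (forall x, 0 <= x -> finv (f x) = x) ->
  (if conv then convex_on_nonneg finv else concave_on_nonneg finv) ->
  0 < m -> m < M ->
  forall x, m <= x -> x <= M ->
  (if conv then f M / M else f m / m) * x <= f x /\
  f x <= (if conv then f m / m else f M / M) * x.
Proof.
move=> f0 hs hinv hc m0 mM x mx xM.
have M0 : 0 < M by apply: lt_trans mM.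
have x0 : 0 < x by apply: lt_le_trans mx.
have fmono : forall a b, 0 <= a -> a <= b -> f a <= f b.
  move=> a b a0; rewrite le_eqVlt => /orP[/eqP -> //|ab].
  exact: ltW (hs _ _ a0 ab).
have fpos : forall z, 0 < z -> 0 < f z by move=> z z0; rewrite -f0 hs.
have finv0 : finv 0 = 0 by rewrite -{1}f0 hinv.
case: conv hc => hc; split.
- have := ratio_conv finv0 hc (fpos x x0) (fmono x M (ltW x0) xM).
  rewrite !hinv ?(ltW x0) ?(ltW M0) // => h.
  by rewrite mulrAC ler_pdivrMr // mulrC.
- have := ratio_conv finv0 hc (fpos m m0) (fmono m x (ltW m0) mx).
  rewrite !hinv ?(ltW x0) ?(ltW m0) // => h.
  by rewrite mulrAC ler_pdivlMr // (mulrC (f x)).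
- have := ratio_conc finv0 hc (fpos m m0) (fmono m x (ltW m0) mx).
  rewrite !hinv ?(ltW x0) ?(ltW m0) // => h.
  by rewrite mulrAC ler_pdivrMr // (mulrC (f x)).
- have := ratio_conc finv0 hc (fpos x x0) (fmono x M (ltW x0) xM).
  rewrite !hinv ?(ltW x0) ?(ltW M0) // => h.
  by rewrite mulrAC ler_pdivlMr // (mulrC (f M)).
Qed.

End Sc.

Unset Implicit Arguments.
Theorem proposition2p12 (R : realType) (n : nat)
  (f finv : R -> R) (m M : R)
  (sigma : 'M[R[i]]_n -> 'M[R[i]]_n -> 'M[R[i]]_n) :
  (* f : [0,oo) -> [0,oo) strictly increasing bijection with f 0 = 0 *)
  f 0 = 0 ->
  (forall x, 0 <= x -> 0 <= f x) ->
  (forall x y, 0 <= x -> x < y -> f x < f y) ->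
  (forall y, 0 <= y -> exists2 x, 0 <= x & f x = y) ->
  (* finv is the inverse function f^{-1} : [0,oo) -> [0,oo) *)
  (forall y, 0 <= y -> 0 <= finv y) ->
  (forall x, 0 <= x -> finv (f x) = x) ->
  (forall y, 0 <= y -> f (finv y) = y) ->
  0 < m -> m < M ->
  matrix_mean sigma ->
  (differentiable_on_nonneg finv -> convex_on_nonneg finv ->
   forall A B FA FB : 'M[R[i]]_n,
     pd A -> pd B ->
     lowner ((m%:C)%C *: 1%:M) A -> lowner A ((M%:C)%C *: 1%:M) ->
     lowner ((m%:C)%C *: 1%:M) B -> lowner B ((M%:C)%C *: 1%:M) ->
     funcalc f A FA -> funcalc f B FB ->
     lowner (((f M / M)%:C)%C *: sigma A B) (sigma FA FB) /\
     lowner (sigma FA FB) (((f m / m)%:C)%C *: sigma A B)) /\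
  (differentiable_on_nonneg finv -> concave_on_nonneg finv ->
   forall A B FA FB : 'M[R[i]]_n,
     pd A -> pd B ->
     lowner ((m%:C)%C *: 1%:M) A -> lowner A ((M%:C)%C *: 1%:M) ->
     lowner ((m%:C)%C *: 1%:M) B -> lowner B ((M%:C)%C *: 1%:M) ->
     funcalc f A FA -> funcalc f B FB ->
     lowner (((f m / m)%:C)%C *: sigma A B) (sigma FA FB) /\
     lowner (sigma FA FB) (((f M / M)%:C)%C *: sigma A B)).
Proof.
move=> f0 fnn hs hsurj hinvnn hinv hinv2 m0 mM hmean.
have M0 : 0 < M by apply: lt_trans mM.
have fpos : forall z, 0 < z -> 0 < f z by move=> z z0; rewrite -f0 hs.
have c1p : 0 < f M / M by rewrite divr_gt0 // fpos.
have c2p : 0 < f m / m by rewrite divr_gt0 // fpos.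
have fnn' : forall x, m <= x -> 0 <= f x.
  by move=> x mx; apply: fnn; apply: le_trans (ltW m0) mx.
split=> _ hc A B FA FB pA pB lA uA lB uB fA fB.
- have hb := bounds_gen (conv := true) f0 hs hinv hc m0 mM.
  exact: (main_gen hmean m0 c1p c2p fnn' hb pA pB lA uA lB uB fA fB).
- have hb := bounds_gen (conv := false) f0 hs hinv hc m0 mM.
  exact: (main_gen hmean m0 c2p c1p fnn' hb pA pB lA uA lB uB fA fB).
Qed.
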